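(* Transport $T$ via $\varepsilon$ to an antilinear map of $(H\otimes R)\oplus(H^*\otimes R^* )$. Then this map is a sum $A_1\otimes B_1+A_2\otimes B_2$ of two pure tensors of $\mathbb C$-antilinear maps, as follows. - If $T$ is mixing: $A_1\otimes B_1:H\otimes R\to H^*\otimes R^*$ with $A_1:H\to H^*$ and $B_1:R\to R^*$, and $A_2\otimes B_2:H^*\otimes R^*\to H\otimes R$ with $A_2:H^*\to H$ and $B_2:R^*\to R$. - If $T$ is nonmixing: $A_1\otimes B_1:H\otimes R\to H\otimes R$ with $A_1:H\to H$ and $B_1:R\to R$, and $A_2\otimes B_2:H^*\otimes R^*\to H^*\otimes R^*$ with $A_2:H^*\to H^*$ and $B_2:R^*\to R^*$.
   Context: Setting: - $G_0$ is a compact group, and $R$ is a finite-dimensional irreducible unitary $G_0$-representation with a $G_0$-invariant Hermitian inner product $\langle\,,\rangle_R$. - $V$ is a finite-dimensional unitary $G_0$-representation with inner product $\langle\,,\rangle_V$, all of whose irreducible subrepresentations are isomorphic to $R$. Duals carry the action $g(f)=f\circ g^{-1}$. - $W=V\oplus V^*$, with antilinear $C:W\to W$ given by $C(v)=\langle v,\cdot\rangle_V$ on $V$ and $C|_{V^*}=(C|_V)^{-1}$. The unitary structure on $V^*$ is transported by $C$. - $H=\mathrm{Hom}_{G_0}(R,V)$, $H^*=\mathrm{Hom}_{G_0}(R^*,V^* )$, and $\varepsilon:(H\otimes R)\oplus(H^*\otimes R^* )\to W$, $h\otimes r+f\otimes t\mapsto h(r)+f(t)$, which is a $G_0$-equivariant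 isomorphism. - The Hermitian form on $H$ is defined by $\langle h_1(r_1),h_2(r_2)\rangle_V=\langle h_1,h_2\rangle_H\langle r_1,r_2\rangle_R$, and similarly on $H^*$. - $T:W\to W$ is an antiunitary operator commuting with $C$, and there is an automorphism $a$ of $G_0$ such that $T\circ g=a(g)\circ T$ on $W$ for all $g\in G_0$. - $T$ is either mixing ($T(V)=V^*$, $T(V^* )=V$) or nonmixing ($T(V)=V$, $T(V^* )=V^*$). For antilinear maps $A,B$, the map $A\otimes B$ is defined by $(A\otimes B)(x\otimes y)=A(x)\otimes B(y)$. *)

(* Defs.v *)
From HB Require Import structures.
From mathcomp Require Import all_boot all_order all_algebra.
From mathcomp Require Import all_classical all_reals all_analysis.
From mathcomp Require Import complex.
From Stdlib Require Import ClassicalEpsilon.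
Set Implicit Arguments. Unset Strict Implicit. Unset Printing Implicit Defensive.
Import Order.TTheory GRing.Theory Num.Theory.
Import numFieldNormedType.Exports.
Local Open Scope ring_scope.

Section Defs.
Variable K : realType.
Local Notation C := (K[i]).

Definition antilinear_on (U W : lmodType C) (P : U -> Prop) (f : U -> W) :=
  forall (a : C) (x y : U), P x -> P y -> f (a *: x + y) = a^* *: f x + f y.
Definition antilinear (U W : lmodType C) (f : U -> W) :=
  antilinear_on (fun _ => True) f.
Definition antilinear_between (U W : lmodType C) (P : U -> Prop) (Q : W -> Prop)
    (f : U -> W) := antilinear_on P f /\ (forall x, P x -> Q (f x)).

(** Hermitian inner product, antilinear in the first, linear in the second slot *)
Definition is_inner_product (V : lmodType C) (ip : V -> V -> C) :=
  [/\ forall x (a : C) y z, ip x (a *: y + z) = a * ip x y + ip x z,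
      forall x y, ip y x = (ip x y)^*
    & forall x, x != 0 -> 0 < ip x x].

Definition compact_group (G : topologicalType) (mul : G -> G -> G) (inv : G -> G)
    (e : G) :=
  [/\ associative mul, left_id e mul & left_inverse e inv mul] /\
  [/\ continuous (fun p : G * G => mul p.1 p.2), continuous inv,
      compact [set: G] & hausdorff_space G].

Definition group_automorphism (G : Type) (mul : G -> G -> G) (a : G -> G) :=
  bijective a /\ forall g h, a (mul g h) = mul (a g) (a h).

Definition unitary_rep (G : topologicalType) (mul : G -> G -> G) (e : G)
    (V : vectType C) (ip : V -> V -> C) (rho : G -> 'End(V)) :=
  [/\ rho e = \1%VF,
      forall g h, rho (mul g h) = (rho g \o rho h)%VF,
      forall g v w, ip (rho g v) (rho g w) = ip v w
    & forall v w, continuous (fun g : G => (@complex.Re K (ip v (rho g w)) : K)) /\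
                  continuous (fun g : G => (@complex.Im K (ip v (rho g w)) : K))].

Definition invariant (G : Type) (V : vectType C) (rho : G -> 'End(V))
    (U : {vspace V}) := forall g, (rho g @: U <= U)%VS.

Definition irreducible_sub (G : Type) (V : vectType C) (rho : G -> 'End(V))
    (U : {vspace V}) :=
  [/\ U != 0%VS, invariant rho U &
      forall U' : {vspace V}, (U' <= U)%VS -> invariant rho U' ->
        U' = 0%VS \/ U' = U].

Definition isotypic_of (G : Type) (Rr V : vectType C) (rhoR : G -> 'End(Rr))
    (rhoV : G -> 'End(V)) :=
  forall U : {vspace V}, irreducible_sub rhoV U ->
    exists f : 'Hom(Rr, V),
      [/\ lker f = 0%VS, limg f = U & forall g, (f \o rhoR g = rhoV g \o f)%VF].

Definition dual (V : vectType C) := 'Hom(V, C^o).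
Definition dact (G : Type) (inv : G -> G) (V : vectType C) (rho : G -> 'End(V))
    (g : G) (f : dual V) : dual V := (f \o rho (inv g))%VF.

Definition actW (G : Type) (inv : G -> G) (V : vectType C) (rho : G -> 'End(V))
    (g : G) (w : V * dual V) : V * dual V := (rho g w.1, dact inv rho g w.2).

Definition Cdual (V : vectType C) (ip : V -> V -> C) (v : V) : dual V :=
  linfun (fun w : V => (ip v w : C^o)).
Definition Cinv (V : vectType C) (ip : V -> V -> C) (f : dual V) : V :=
  epsilon (inhabits 0) (fun v => Cdual ip v = f).
Definition CW (V : vectType C) (ip : V -> V -> C) (w : V * dual V) : V * dual V :=
  (Cinv ip w.2, Cdual ip w.1).

Definition ipdual (V : vectType C) (ip : V -> V -> C) (f f' : dual V) : C :=
  ip (Cinv ip f') (Cinv ip f).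
Definition ipW (V : vectType C) (ip : V -> V -> C) (x y : V * dual V) : C :=
  ip x.1 y.1 + ipdual ip x.2 y.2.

Definition antiunitary (V : vectType C) (ip : V -> V -> C)
    (T : V * dual V -> V * dual V) :=
  [/\ antilinear T, bijective T &
      forall x y, ipW ip (T x) (T y) = (ipW ip x y)^*].

Definition mixing (V : vectType C) (T : V * dual V -> V * dual V) :=
  (forall v, (T (v, 0)).1 = 0) /\ (forall f, (T (0, f)).2 = 0).
Definition nonmixing (V : vectType C) (T : V * dual V -> V * dual V) :=
  (forall v, (T (v, 0)).2 = 0) /\ (forall f, (T (0, f)).1 = 0).

(** H = Hom_G(R, V) and its dual counterpart Hom_G(dual R, dual V) *)
Definition Hom_G (G : Type) (Rr V : vectType C) (rhoR : G -> 'End(Rr))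
    (rhoV : G -> 'End(V)) (h : 'Hom(Rr, V)) :=
  forall g r, h (rhoR g r) = rhoV g (h r).
Definition Hom_G_dual (G : Type) (inv : G -> G) (Rr V : vectType C)
    (rhoR : G -> 'End(Rr)) (rhoV : G -> 'End(V)) (h : 'Hom(dual Rr, dual V)) :=
  forall g t, h (dact inv rhoR g t) = dact inv rhoV g (h t).

End Defs.

(* Main.v *)
Require Import Defs.
From HB Require Import structures.
From mathcomp Require Import all_boot all_order all_algebra.
From mathcomp Require Import all_classical all_reals all_analysis.
From mathcomp Require Import complex.
From Stdlib Require Import ClassicalEpsilon.
Set Warnings "-all".

Import Order.TTheory GRing.Theory Num.Theory.
Import numFieldNormedType.Exports.
Local Open Scope ring_scope.

Section Aux.
Variable K : realType.
Local Notation C := (K[i]).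

Lemma linfunE' (U W : vectType C) (f : U -> W)
  (Hf : forall c x y, f (c *: x + y) = c *: f x + f y) x : linfun f x = f x.
Proof.
pose F : {linear U -> W} := HB.pack f (GRing.isLinear.Build _ _ _ _ f Hf).
exact: (lfunE F x).
Qed.

Lemma dim_dual (V : vectType C) : \dim {: dual V} = \dim {: V}.
Proof. rewrite !dimvf /dual. change (dim V * dim (K[i])^o = dim V)%N. rewrite -[RHS]muln1; congr (_ * _)%N. Qed.

Section Anti.
Variables (U W : vectType C) (f : U -> W) (Hf : antilinear f).
Lemma anti0 : f 0 = 0.
Proof.
have := Hf 1 0 0 I I; rewrite scale1r addr0 rmorph1 scale1r.
by move=> H; apply: (addrI (f 0)); rewrite addr0 -H.
Qed.
Lemma antiD x y : f (x + y) = f x + f y.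
Proof. by have := Hf 1 x y I I; rewrite scale1r rmorph1 scale1r. Qed.
Lemma antiZ c x : f (c *: x) = c^* *: f x.
Proof. by have := Hf c x 0 I I; rewrite !addr0 anti0 addr0. Qed.
Lemma anti_sum n (c : 'I_n -> C) (x : 'I_n -> U) :
  f (\sum_i c i *: x i) = \sum_i (c i)^* *: f (x i).
Proof.
elim/big_rec2: _ => [|i y1 y2 _ <-]; first exact: anti0.
by rewrite antiD antiZ.
Qed.

Lemma anti_surj (Hinj : injective f) (Hd : (\dim {:W} <= \dim {:U})%N) :
  forall w, exists u, f u = w.
Proof.
pose X := vbasis (fullv : {vspace U}).
pose Y := map_tuple f X.
have freeY : free Y.
  apply/freeP => k Hk i.
  have : f (\sum_i (k i)^* *: X`_i) = 0.
    rewrite anti_sum -[RHS]Hk; apply: eq_bigr => j _.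
    by rewrite conjCK (nth_map 0) // size_tuple.
  rewrite -anti0 => /Hinj /eqP.
  move/freeP: (basis_free (vbasisP (fullv : {vspace U}))) => Hfr.
  move/eqP/Hfr => /(_ i) /eqP.
  by rewrite conjC_eq0 => /eqP.
have spanY : (<<Y>> = fullv)%VS.
  apply/eqP; rewrite eqEdim subvf /=.
  move: freeY; rewrite /free => /eqP ->.
  by rewrite size_tuple; apply: leq_trans Hd _.
move=> w.
have : w \in <<Y>>%VS by rewrite spanY memvf.
move/coord_span => ->.
exists (\sum_i (coord Y i w)^* *: X`_i).
rewrite anti_sum; apply: eq_bigr => j _.
by rewrite conjCK (nth_map 0) // size_tuple.
Qed.

Lemma aimgP (X : {vspace U}) w :
  reflect (exists2 x, x \in X & w = f x) (w \in <<map_tuple f (vbasis X)>>%VS).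
Proof.
apply: (iffP idP).
- move/coord_span => ->.
  exists (\sum_i (coord (map_tuple f (vbasis X)) i w)^* *: (vbasis X)`_i).
    apply: rpred_sum => i _; apply: rpredZ; apply: vbasis_mem; apply: mem_nth.
    by rewrite size_tuple.
  rewrite anti_sum; apply: eq_bigr => j _.
  by rewrite conjCK (nth_map 0) // size_tuple.
- case=> x Hx ->; rewrite (coord_vbasis Hx) anti_sum.
  apply: rpred_sum => i _; apply: rpredZ; apply: memv_span.
  rewrite /= (_ : f (vbasis X)`_i = (map f (vbasis X))`_i); last first.
    by rewrite (nth_map 0) // size_tuple.
  by apply: mem_nth; rewrite size_map size_tuple.
Qed.
End Anti.
Arguments aimgP {U W f}.
Arguments anti0 {U W f}.
Arguments antiD {U W f}.
Arguments antiZ {U W f}.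
Arguments anti_sum {U W f}.
Arguments anti_surj {U W f}.

Section IP.
Variables (V : vectType C) (ip : V -> V -> C) (Hip : is_inner_product ip).

Lemma ipDr x a y z : ip x (a *: y + z) = a * ip x y + ip x z.
Proof. by case: Hip. Qed.
Lemma ipC x y : ip y x = (ip x y)^*.
Proof. by case: Hip. Qed.
Lemma ipDl x a y z : ip (a *: y + z) x = a^* * ip y x + ip z x.
Proof. by rewrite ipC ipDr rmorphD rmorphM /= -!ipC. Qed.

Lemma CdualE v w : Cdual ip v w = ip v w.
Proof. by rewrite /Cdual linfunE' // => c x y; rewrite ipDr. Qed.

Lemma Cdual_anti : antilinear (Cdual ip).
Proof.
move=> a v w _ _; apply/lfunP => x.
by rewrite add_lfunE scale_lfunE !CdualE ipDl.
Qed.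

Lemma Cdual_inj : injective (Cdual ip).
Proof.
move=> v w Hvw.
have H0 : Cdual ip (v + (-1) *: w) = 0.
  by rewrite (antiD Cdual_anti) (antiZ Cdual_anti) Hvw rmorphN1 scaleN1r subrr.
apply/eqP; rewrite -subr_eq0 -scaleN1r; apply/negPn/negP => Hne.
case: Hip => _ _ /(_ _ Hne).
by rewrite -CdualE H0 lfunE /= ltxx.
Qed.

Lemma Cdual_surj f : exists v, Cdual ip v = f.
Proof. by apply: (anti_surj Cdual_anti Cdual_inj); rewrite dim_dual. Qed.

Lemma CinvK f : Cdual ip (Cinv ip f) = f.
Proof. by rewrite /Cinv; apply: (epsilon_spec (inhabits 0) (fun v => Cdual ip v = f)); apply: Cdual_surj. Qed.

Lemma CdualK v : Cinv ip (Cdual ip v) = v.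
Proof. by apply: Cdual_inj; rewrite CinvK. Qed.

Lemma Cinv_anti : antilinear (Cinv ip).
Proof.
move=> a f g _ _; apply: Cdual_inj.
by rewrite Cdual_anti // !CinvK conjCK.
Qed.

Lemma Cinv_inj : injective (Cinv ip).
Proof. by move=> f g H; rewrite -(CinvK f) H CinvK. Qed.

Variables (G : topologicalType) (mul : G -> G -> G) (inv : G -> G) (e : G).
Hypothesis Hgrp : [/\ associative mul, left_id e mul & left_inverse e inv mul].
Variable rho : G -> 'End(V).
Hypothesis Hrho : unitary_rep mul e ip rho.

Lemma mulgV' g : mul g (inv g) = e.
Proof.
case: Hgrp => A L I.
rewrite -[mul g _]L -{1}(I (inv g)) -A (A (inv g)) I L. exact: I.
Qed.

Lemma rho_inv g w : rho g (rho (inv g) w) = w.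
Proof.
case: Hrho => He HM _ _.
by rewrite -comp_lfunE -HM mulgV' He id_lfunE.
Qed.

Lemma Cdual_equiv g v : Cdual ip (rho g v) = dact inv rho g (Cdual ip v).
Proof.
apply/lfunP => w; rewrite /dact comp_lfunE !CdualE.
case: Hrho => _ _ Hu _.
by rewrite -{1}(rho_inv g w) Hu.
Qed.

Lemma Cinv_equiv g f : Cinv ip (dact inv rho g f) = rho g (Cinv ip f).
Proof. by apply: Cdual_inj; rewrite CinvK Cdual_equiv CinvK. Qed.
End IP.
Arguments ipDr {V ip}.
Arguments ipC {V ip}.
Arguments ipDl {V ip}.
Arguments CdualE {V ip}.
Arguments Cdual_anti {V ip}.
Arguments Cdual_inj {V ip}.
Arguments Cdual_surj {V ip}.
Arguments CinvK {V ip}.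
Arguments CdualK {V ip}.
Arguments Cinv_anti {V ip}.
Arguments Cinv_inj {V ip}.
Arguments mulgV' {G mul inv e}.
Arguments rho_inv {V ip G mul inv e} Hgrp {rho}.
Arguments Cdual_equiv {V ip} Hip {G mul inv e} Hgrp {rho}.
Arguments Cinv_equiv {V ip} Hip {G mul inv e} Hgrp {rho}.


Section Core.
Variables (G : topologicalType) (a : G -> G).
Hypothesis Hasurj : forall g, exists g', a g' = g.
Variables (Rr : vectType C) (rhoR : G -> 'End(Rr)) (V : vectType C) (rhoV : G -> 'End(V)).
Hypothesis Hiso : isotypic_of rhoR rhoV.
Variables (Rs : vectType C) (tau : G -> Rs -> Rs).
Hypothesis HirrS : forall U' : {vspace Rs},
  (forall g u, u \in U' -> tau g u \in U') -> U' = 0%VS \/ U' = fullv.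
Variable k : 'Hom(Rs, V).
Hypothesis Hk : forall g x, k (tau g x) = rhoV (a g) (k x).
Hypothesis Hnz : exists x, k x != 0.

Lemma core : exists M : 'Hom(Rs, Rr),
  injective M /\ forall g x, M (tau g x) = rhoR (a g) (M x).
Proof.
have Hker : lker k == 0%VS.
  case: (HirrS (lker k)) => [g u|->//|Hf].
    by rewrite !memv_ker => /eqP Hu; rewrite Hk Hu linear0.
  by case: Hnz => x; rewrite -memv_ker Hf memvf.
have Hirrk : irreducible_sub rhoV (limg k).
  split.
  - case: Hnz => x Hx; apply/eqP => H0.
    by move: (memv_img k (memvf x)); rewrite H0 memv0 (negbTE Hx).
  - move=> g; apply/subvP => y /memv_imgP [u Hu ->].
    case/memv_imgP: Hu => x _ ->; case: (Hasurj g) => g' <-.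
    by rewrite -Hk; apply: memv_img; apply: memvf.
  - move=> U' HU' Hinv.
    case: (HirrS (k @^-1: U')%VS) => [g u|H0|Hf].
    + rewrite -!memv_preim Hk => Hu.
      exact: (subvP (Hinv (a g))) (memv_img _ Hu).
    + left; apply/eqP; rewrite -subv0; apply/subvP => u Hu.
      case/memv_imgP: (subvP HU' u Hu) => x _ Hx; subst u.
      move: Hu; rewrite memv_preim H0 => Hx0; rewrite memv0 in Hx0.
      by rewrite (eqP Hx0) linear0 memv0.
    + right; apply/eqP; rewrite eqEsubv HU' /=; apply/subvP => y /memv_imgP [x _ ->].
      by rewrite memv_preim Hf memvf.
case: (Hiso (limg k) Hirrk) => f [Hfk Hfi Hfe].
have Hkf : forall x, k x = f (f^-1%VF (k x)).
  by move=> x; rewrite limg_lfunVK // Hfi; apply: memv_img; apply: memvf.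
exists (f^-1 \o k)%VF; split.
- move=> x y; rewrite !comp_lfunE => H.
  apply: (lker0P Hker); by rewrite Hkf H -Hkf.
- move=> g x; rewrite !comp_lfunE Hk {1}Hkf.
  have -> : rhoV (a g) (f (f^-1%VF (k x))) = f (rhoR (a g) (f^-1%VF (k x))).
    by rewrite -!comp_lfunE Hfe.
  by rewrite lker0_lfunK // Hfk.
Qed.
End Core.


Section Assemble.
Variables (G : Type) (a : G -> G).
Hypothesis Hasurj : forall g, exists g', a g' = g.
Variables (Hs : lmodType C) (P : Hs -> Prop) (Rs Z Y : vectType C).
Variables (tau : G -> Rs -> Rs) (zeta : G -> Z -> Z) (sigma : G -> Y -> Y).
Hypothesis Hsig0 : forall g, sigma g 0 = 0.
Variable S : Hs -> Rs -> Y.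
Hypothesis HSr : forall h, antilinear (S h).
Hypothesis HSh : forall c h h' r, S (c *: h + h') r = c^* *: S h r + S h' r.
Hypothesis HSe : forall h g r, P h -> S h (tau g r) = sigma (a g) (S h r).
Hypothesis HB : (exists B : Rs -> Z, [/\ antilinear B, injective B,
    (forall z, exists r, B r = z) & forall g r, B (tau g r) = zeta (a g) (B r)])
  \/ (forall h r, P h -> S h r = 0).

Lemma assemble : exists (A : Hs -> 'Hom(Z, Y)) (B : Rs -> Z),
  [/\ antilinear_between P (fun A : 'Hom(Z, Y) =>
         forall g z, A (zeta g z) = sigma g (A z)) A
    & antilinear B] /\ forall h r, P h -> S h r = A h (B r).
Proof.
case: HB => [[B [Ba Bi Bs Be]]|H0]; last first.
  exists (fun _ => 0), (fun _ => 0); split; last by move=> h r Ph; rewrite H0 // zero_lfunE.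
  split; first split.
  - by move=> c x y _ _; rewrite scaler0 addr0.
  - by move=> x _ g z; rewrite !zero_lfunE Hsig0.
  - by move=> c x y _ _; rewrite scaler0 addr0.
pose Binv z := proj1_sig (cid (Bs z)).
have BinvK z : B (Binv z) = z by rewrite /Binv; case: cid.
have BK r : Binv (B r) = r by apply: Bi; rewrite BinvK.
have Binva : antilinear Binv.
  by move=> c z z' _ _; apply: Bi; rewrite Ba // !BinvK conjCK.
pose A h := linfun (fun z => S h (Binv z)).
have AE h z : A h z = S h (Binv z).
  rewrite /A linfunE' // => c x y.
  by rewrite Binva // HSr // conjCK.
exists A, B; split; last by move=> h r _; rewrite AE BK.
split => //; split.
- move=> c h h' _ _; apply/lfunP => z.
  by rewrite add_lfunE scale_lfunE !AE HSh.
- move=> h Ph g z.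
  case: (Hasurj g) => g' <-; case: (Bs z) => r <-.
  by rewrite -Be !AE !BK HSe.
Qed.
End Assemble.

Lemma irr_pw {G : Type} {V : vectType C} {rho : G -> 'End(V)} :
  irreducible_sub rho fullv -> forall U' : {vspace V},
  (forall g u, u \in U' -> rho g u \in U') -> U' = 0%VS \/ U' = fullv.
Proof.
case=> _ _ H U' HU; apply: H; first exact: subvf.
move=> g; apply/subvP => y /memv_imgP [u Hu ->]; exact: HU.
Qed.

Lemma dual_irr {Rr : vectType C} {ipR : Rr -> Rr -> C} (HipR : is_inner_product ipR)
  {G : topologicalType} {mul : G -> G -> G} {inv : G -> G} {e : G}
  (Hgrp : [/\ associative mul, left_id e mul & left_inverse e inv mul])
  {rhoR : G -> 'End(Rr)} (HrhoR : unitary_rep mul e ipR rhoR)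
  (Hirr : irreducible_sub rhoR fullv) :
  forall U' : {vspace dual Rr},
  (forall g u, u \in U' -> dact inv rhoR g u \in U') -> U' = 0%VS \/ U' = fullv.
Proof.
move=> U' HU.
have Ca := Cinv_anti HipR.
pose X := <<map_tuple (Cinv ipR) (vbasis U')>>%VS.
case: (irr_pw Hirr X) => [g u /(aimgP Ca) [t Ht ->]|HX|HX].
- rewrite -(Cinv_equiv HipR Hgrp HrhoR); apply/(aimgP Ca).
  by exists (dact inv rhoR g t) => //; apply: HU.
- left; apply/eqP; rewrite -subv0; apply/subvP => t Ht.
  have : Cinv ipR t \in X by apply/(aimgP Ca); exists t.
  rewrite HX => Ht0; rewrite memv0 in Ht0; move/eqP: Ht0 => Ht0.
  have -> : t = 0 by apply: (Cinv_inj HipR); rewrite Ht0 (anti0 Ca).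
  exact: mem0v.
- right; apply/eqP; rewrite eqEsubv subvf /=; apply/subvP => t _.
  have : Cinv ipR t \in X by rewrite HX memvf.
  by case/(aimgP Ca) => u Hu /(Cinv_inj HipR) ->.
Qed.

Lemma anti_compL (X U W : vectType C) (f : U -> W) (L : 'Hom(X, U)) :
  antilinear f -> antilinear (fun x => f (L x)).
Proof. by move=> Hf c x y _ _; rewrite linearP Hf. Qed.
Lemma anti_Lcomp (U W Y : vectType C) (f : U -> W) (L : 'Hom(W, Y)) :
  antilinear f -> antilinear (fun x => L (f x)).
Proof. by move=> Hf c x y _ _; rewrite Hf // linearP. Qed.
Lemma antianti (U W Y : vectType C) (f : W -> Y) (g : U -> W) :
  antilinear f -> antilinear g ->
  forall c x y, f (g (c *: x + y)) = c *: f (g x) + f (g y).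
Proof. by move=> Hf Hg c x y; rewrite Hg // Hf // conjCK. Qed.

Lemma dact0 (G : Type) (inv : G -> G) (V : vectType C) (rho : G -> 'End(V)) g :
  dact inv rho g 0 = 0.
Proof. by apply/lfunP => x; rewrite /dact comp_lfunE !zero_lfunE. Qed.


Section Main.
Variables (G : topologicalType) (mul : G -> G -> G) (inv : G -> G) (e : G).
Hypothesis Hgrp : [/\ associative mul, left_id e mul & left_inverse e inv mul].
Variables (Rr : vectType C) (ipR : Rr -> Rr -> C).
Hypothesis HipR : is_inner_product ipR.
Variable rhoR : G -> 'End(Rr).
Hypothesis HrhoR : unitary_rep mul e ipR rhoR.
Hypothesis Hirr : irreducible_sub rhoR fullv.
Variables (V : vectType C) (ipV : V -> V -> C).
Hypothesis HipV : is_inner_product ipV.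
Variable rhoV : G -> 'End(V).
Hypothesis HrhoV : unitary_rep mul e ipV rhoV.
Hypothesis Hiso : isotypic_of rhoR rhoV.
Variable T : V * dual V -> V * dual V.
Hypothesis Ta : antilinear T.
Variable a : G -> G.
Hypothesis Hasurj : forall g, exists g', a g' = g.
Hypothesis HTa : forall g w, T (actW inv rhoV g w) = actW inv rhoV (a g) (T w).


Lemma TactV g v : T (rhoV g v, 0) = actW inv rhoV (a g) (T (v, 0)).
Proof. by rewrite -HTa /actW /= dact0. Qed.
Lemma TactD g f : T (0, dact inv rhoV g f) = actW inv rhoV (a g) (T (0, f)).
Proof. by rewrite -HTa /actW /= linear0. Qed.

Lemma TV1 c v w : T (c *: v + w, 0) = c^* *: T (v, 0) + T (w, 0).
Proof.
have -> : (c *: v + w, 0 : dual V) = c *: (v, 0) + (w, 0).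
  by congr (_, _) => /=; rewrite scaler0 addr0.
exact: Ta.
Qed.
Lemma TD1 c f f' : T (0, c *: f + f') = c^* *: T (0, f) + T (0, f').
Proof.
have -> : (0 : V, c *: f + f') = c *: (0, f) + (0, f').
  by congr (_, _) => /=; rewrite scaler0 addr0.
exact: Ta.
Qed.

Let irrR := irr_pw Hirr.
Let irrD := dual_irr HipR Hgrp HrhoR Hirr.

Lemma partH_mix : mixing T ->
  exists (A1 : 'Hom(Rr, V) -> 'Hom(dual Rr, dual V)) (B1 : Rr -> dual Rr),
   [/\ antilinear_between (Hom_G rhoR rhoV) (Hom_G_dual inv rhoR rhoV) A1
     & antilinear B1] /\
   (forall h r, Hom_G rhoR rhoV h -> T (h r, 0) = (0, A1 h (B1 r))).
Proof.
case=> Hm1 _.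
pose S (h : 'Hom(Rr, V)) r := (T (h r, 0)).2.
have HSr h : antilinear (S h).
  by move=> c x y _ _; rewrite /S linearP TV1.
have HSh c h h' r : S (c *: h + h') r = c^* *: S h r + S h' r.
  by rewrite /S add_lfunE scale_lfunE TV1.
have HSe h g r : Hom_G rhoR rhoV h -> S h (rhoR g r) = dact inv rhoV (a g) (S h r).
  by move=> Hh; rewrite /S Hh TactV.
have [A [B [HA HSAB]]] : exists (A : 'Hom(Rr, V) -> 'Hom(dual Rr, dual V)) (B : Rr -> dual Rr),
  [/\ antilinear_between (Hom_G rhoR rhoV) (fun A : 'Hom(dual Rr, dual V) =>
         forall g z, A (dact inv rhoR g z) = dact inv rhoV g (A z)) A
    & antilinear B] /\ forall h r, Hom_G rhoR rhoV h -> S h r = A h (B r).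
  apply: (assemble _ _ Hasurj _ _ _ _ _ (fun g => rhoR g) (dact inv rhoR) (dact inv rhoV)
     (fun g => dact0 _ _ _ _ g) _ HSr HSh HSe).
  case: (classic (exists h r, Hom_G rhoR rhoV h /\ S h r != 0)) => [[h [r [Hh Hne]]]|Hno];
    last first.
    right => h r Hh; apply/eqP; apply/negPn/negP => Hne; apply: Hno; by exists h, r.
  left.
  pose k := linfun (fun r => Cinv ipV (S h r)).
  have kE x : k x = Cinv ipV (S h x).
    by rewrite /k linfunE' //; apply: antianti; [exact: Cinv_anti|exact: HSr].
  have [M [Mi Me]] : exists M : 'Hom(Rr, Rr),
      injective M /\ forall g x, M (rhoR g x) = rhoR (a g) (M x).
    apply: (core _ _ Hasurj _ _ _ _ Hiso _ (fun g => rhoR g) irrR k).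
      by move=> g x; rewrite !kE HSe // (Cinv_equiv HipV Hgrp HrhoV).
    exists r; rewrite kE; apply: contra Hne => /eqP H0.
    by rewrite -(CinvK HipV (S h r)) H0 (anti0 (Cdual_anti HipV)).
  have Ba : antilinear (fun x => Cdual ipR (M x)).
    exact: (@anti_compL _ _ _ _ M (Cdual_anti HipR)).
  have Bi : injective (fun x => Cdual ipR (M x)).
    by move=> x y /(Cdual_inj HipR) /Mi.
  exists (fun x => Cdual ipR (M x)); split => //.
  - by apply: (anti_surj Ba Bi); rewrite dim_dual.
  - by move=> g x; rewrite Me (Cdual_equiv HipR Hgrp HrhoR).
exists A, B; split => // h r Hh.
rewrite -HSAB //; move: (Hm1 (h r)); rewrite /S.
by case: (T (h r, 0)) => x y /= ->.
Qed.

Lemma partD_mix : mixing T ->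
  exists (A2 : 'Hom(dual Rr, dual V) -> 'Hom(Rr, V)) (B2 : dual Rr -> Rr),
   [/\ antilinear_between (Hom_G_dual inv rhoR rhoV) (Hom_G rhoR rhoV) A2
     & antilinear B2] /\
   (forall f t, Hom_G_dual inv rhoR rhoV f -> T (0, f t) = (A2 f (B2 t), 0)).
Proof.
case=> _ Hm2.
pose S (f : 'Hom(dual Rr, dual V)) t := (T (0, f t)).1.
have HSr h : antilinear (S h).
  by move=> c x y _ _; rewrite /S linearP TD1.
have HSh c h h' r : S (c *: h + h') r = c^* *: S h r + S h' r.
  by rewrite /S add_lfunE scale_lfunE TD1.
have HSe h g r : Hom_G_dual inv rhoR rhoV h -> S h (dact inv rhoR g r) = rhoV (a g) (S h r).
  by move=> Hh; rewrite /S Hh TactD.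
have [A [B [HA HSAB]]] : exists (A : 'Hom(dual Rr, dual V) -> 'Hom(Rr, V)) (B : dual Rr -> Rr),
  [/\ antilinear_between (Hom_G_dual inv rhoR rhoV) (fun A : 'Hom(Rr, V) =>
         forall g z, A (rhoR g z) = rhoV g (A z)) A
    & antilinear B] /\ forall h r, Hom_G_dual inv rhoR rhoV h -> S h r = A h (B r).
  apply: (assemble _ _ Hasurj _ _ _ _ _ (dact inv rhoR) (fun g => rhoR g) (fun g => rhoV g)
     (fun g => linear0 _) _ HSr HSh HSe).
  case: (classic (exists h r, Hom_G_dual inv rhoR rhoV h /\ S h r != 0)) => [[h [r [Hh Hne]]]|Hno];
    last first.
    right => h r Hh; apply/eqP; apply/negPn/negP => Hne; apply: Hno; by exists h, r.
  left.
  pose k := linfun (fun x => S h (Cdual ipR x)).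
  have kE x : k x = S h (Cdual ipR x).
    by rewrite /k linfunE' //; apply: antianti; [exact: HSr|exact: Cdual_anti].
  have [M [Mi Me]] : exists M : 'Hom(Rr, Rr),
      injective M /\ forall g x, M (rhoR g x) = rhoR (a g) (M x).
    apply: (core _ _ Hasurj _ _ _ _ Hiso _ (fun g => rhoR g) irrR k).
      by move=> g x; rewrite !kE (Cdual_equiv HipR Hgrp HrhoR) HSe.
    by exists (Cinv ipR r); rewrite kE (CinvK HipR).
  have Ba : antilinear (fun x => M (Cinv ipR x)).
    exact: (@anti_Lcomp _ _ _ _ M (Cinv_anti HipR)).
  have Bi : injective (fun x => M (Cinv ipR x)).
    by move=> x y /Mi /(Cinv_inj HipR).
  exists (fun x => M (Cinv ipR x)); split => //.
  - by apply: (anti_surj Ba Bi); rewrite dim_dual.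
  - by move=> g x; rewrite (Cinv_equiv HipR Hgrp HrhoR) Me.
exists A, B; split => // h r Hh.
rewrite -HSAB //; move: (Hm2 (h r)); rewrite /S.
by case: (T (0, h r)) => x y /= ->.
Qed.

Lemma partH_non : nonmixing T ->
  exists (A1 : 'Hom(Rr, V) -> 'Hom(Rr, V)) (B1 : Rr -> Rr),
   [/\ antilinear_between (Hom_G rhoR rhoV) (Hom_G rhoR rhoV) A1
     & antilinear B1] /\
   (forall h r, Hom_G rhoR rhoV h -> T (h r, 0) = (A1 h (B1 r), 0)).
Proof.
case=> Hm1 _.
pose S (h : 'Hom(Rr, V)) r := (T (h r, 0)).1.
have HSr h : antilinear (S h).
  by move=> c x y _ _; rewrite /S linearP TV1.
have HSh c h h' r : S (c *: h + h') r = c^* *: S h r + S h' r.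
  by rewrite /S add_lfunE scale_lfunE TV1.
have HSe h g r : Hom_G rhoR rhoV h -> S h (rhoR g r) = rhoV (a g) (S h r).
  by move=> Hh; rewrite /S Hh TactV.
have [A [B [HA HSAB]]] : exists (A : 'Hom(Rr, V) -> 'Hom(Rr, V)) (B : Rr -> Rr),
  [/\ antilinear_between (Hom_G rhoR rhoV) (fun A : 'Hom(Rr, V) =>
         forall g z, A (rhoR g z) = rhoV g (A z)) A
    & antilinear B] /\ forall h r, Hom_G rhoR rhoV h -> S h r = A h (B r).
  apply: (assemble _ _ Hasurj _ _ _ _ _ (fun g => rhoR g) (fun g => rhoR g) (fun g => rhoV g)
     (fun g => linear0 _) _ HSr HSh HSe).
  case: (classic (exists h r, Hom_G rhoR rhoV h /\ S h r != 0)) => [[h [r [Hh Hne]]]|Hno];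
    last first.
    right => h r Hh; apply/eqP; apply/negPn/negP => Hne; apply: Hno; by exists h, r.
  left.
  pose k := linfun (fun x => S h (Cinv ipR x)).
  have kE x : k x = S h (Cinv ipR x).
    by rewrite /k linfunE' //; apply: antianti; [exact: HSr|exact: Cinv_anti].
  have [M [Mi Me]] : exists M : 'Hom(dual Rr, Rr),
      injective M /\ forall g x, M (dact inv rhoR g x) = rhoR (a g) (M x).
    apply: (core _ _ Hasurj _ _ _ _ Hiso _ (dact inv rhoR) irrD k).
      by move=> g x; rewrite !kE (Cinv_equiv HipR Hgrp HrhoR) HSe.
    by exists (Cdual ipR r); rewrite kE (CdualK HipR).
  have Ba : antilinear (fun x => M (Cdual ipR x)).
    exact: (@anti_Lcomp _ _ _ _ M (Cdual_anti HipR)).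
  have Bi : injective (fun x => M (Cdual ipR x)).
    by move=> x y /Mi /(Cdual_inj HipR).
  exists (fun x => M (Cdual ipR x)); split => //.
  - by apply: (anti_surj Ba Bi).
  - by move=> g x; rewrite (Cdual_equiv HipR Hgrp HrhoR) Me.
exists A, B; split => // h r Hh.
rewrite -HSAB //; move: (Hm1 (h r)); rewrite /S.
by case: (T (h r, 0)) => x y /= ->.
Qed.

Lemma partD_non : nonmixing T ->
  exists (A2 : 'Hom(dual Rr, dual V) -> 'Hom(dual Rr, dual V)) (B2 : dual Rr -> dual Rr),
   [/\ antilinear_between (Hom_G_dual inv rhoR rhoV) (Hom_G_dual inv rhoR rhoV) A2
     & antilinear B2] /\
   (forall f t, Hom_G_dual inv rhoR rhoV f -> T (0, f t) = (0, A2 f (B2 t))).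
Proof.
case=> _ Hm2.
pose S (f : 'Hom(dual Rr, dual V)) t := (T (0, f t)).2.
have HSr h : antilinear (S h).
  by move=> c x y _ _; rewrite /S linearP TD1.
have HSh c h h' r : S (c *: h + h') r = c^* *: S h r + S h' r.
  by rewrite /S add_lfunE scale_lfunE TD1.
have HSe h g r : Hom_G_dual inv rhoR rhoV h ->
    S h (dact inv rhoR g r) = dact inv rhoV (a g) (S h r).
  by move=> Hh; rewrite /S Hh TactD.
have [A [B [HA HSAB]]] : exists (A : 'Hom(dual Rr, dual V) -> 'Hom(dual Rr, dual V))
    (B : dual Rr -> dual Rr),
  [/\ antilinear_between (Hom_G_dual inv rhoR rhoV) (fun A : 'Hom(dual Rr, dual V) =>
         forall g z, A (dact inv rhoR g z) = dact inv rhoV g (A z)) A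
    & antilinear B] /\ forall h r, Hom_G_dual inv rhoR rhoV h -> S h r = A h (B r).
  apply: (assemble _ _ Hasurj _ _ _ _ _ (dact inv rhoR) (dact inv rhoR) (dact inv rhoV)
     (fun g => dact0 _ _ _ _ g) _ HSr HSh HSe).
  case: (classic (exists h r, Hom_G_dual inv rhoR rhoV h /\ S h r != 0)) => [[h [r [Hh Hne]]]|Hno];
    last first.
    right => h r Hh; apply/eqP; apply/negPn/negP => Hne; apply: Hno; by exists h, r.
  left.
  pose k := linfun (fun x => Cinv ipV (S h x)).
  have kE x : k x = Cinv ipV (S h x).
    by rewrite /k linfunE' //; apply: antianti; [exact: Cinv_anti|exact: HSr].
  have [M [Mi Me]] : exists M : 'Hom(dual Rr, Rr),
      injective M /\ forall g x, M (dact inv rhoR g x) = rhoR (a g) (M x).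
    apply: (core _ _ Hasurj _ _ _ _ Hiso _ (dact inv rhoR) irrD k).
      by move=> g x; rewrite !kE HSe // (Cinv_equiv HipV Hgrp HrhoV).
    exists r; rewrite kE; apply: contra Hne => /eqP H0.
    by rewrite -(CinvK HipV (S h r)) H0 (anti0 (Cdual_anti HipV)).
  have Ba : antilinear (fun x => Cdual ipR (M x)).
    exact: (@anti_compL _ _ _ _ M (Cdual_anti HipR)).
  have Bi : injective (fun x => Cdual ipR (M x)).
    by move=> x y /(Cdual_inj HipR) /Mi.
  exists (fun x => Cdual ipR (M x)); split => //.
  - by apply: (anti_surj Ba Bi).
  - by move=> g x; rewrite Me (Cdual_equiv HipR Hgrp HrhoR).
exists A, B; split => // h r Hh.
rewrite -HSAB //; move: (Hm2 (h r)); rewrite /S.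
by case: (T (0, h r)) => x y /= ->.
Qed.
End Main.
End Aux.
Theorem proposition3p5
  (K : realType) (G : topologicalType) (mul : G -> G -> G) (inv : G -> G) (e : G)
  (HG : compact_group mul inv e)
  (Rr : vectType K[i]) (ipR : Rr -> Rr -> K[i]) (HipR : is_inner_product ipR)
  (rhoR : G -> 'End(Rr)) (HrhoR : unitary_rep mul e ipR rhoR)
  (Hirr : irreducible_sub rhoR fullv)
  (V : vectType K[i]) (ipV : V -> V -> K[i]) (HipV : is_inner_product ipV)
  (rhoV : G -> 'End(V)) (HrhoV : unitary_rep mul e ipV rhoV)
  (Hiso : isotypic_of rhoR rhoV)
  (T : V * dual V -> V * dual V) (HT : antiunitary ipV T)
  (HTC : forall w, T (CW ipV w) = CW ipV (T w))
  (a : G -> G) (Ha : group_automorphism mul a)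
  (HTa : forall g w, T (actW inv rhoV g w) = actW inv rhoV (a g) (T w))
  (Hcase : mixing T \/ nonmixing T) :
  (mixing T ->
   exists (A1 : 'Hom(Rr, V) -> 'Hom(dual Rr, dual V)) (B1 : Rr -> dual Rr)
          (A2 : 'Hom(dual Rr, dual V) -> 'Hom(Rr, V)) (B2 : dual Rr -> Rr),
     [/\ antilinear_between (Hom_G rhoR rhoV) (Hom_G_dual inv rhoR rhoV) A1,
         antilinear B1,
         antilinear_between (Hom_G_dual inv rhoR rhoV) (Hom_G rhoR rhoV) A2
       & antilinear B2] /\
     (forall h r, Hom_G rhoR rhoV h -> T (h r, 0) = (0, A1 h (B1 r))) /\
     (forall f t, Hom_G_dual inv rhoR rhoV f -> T (0, f t) = (A2 f (B2 t), 0)))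
  /\
  (nonmixing T ->
   exists (A1 : 'Hom(Rr, V) -> 'Hom(Rr, V)) (B1 : Rr -> Rr)
          (A2 : 'Hom(dual Rr, dual V) -> 'Hom(dual Rr, dual V)) (B2 : dual Rr -> dual Rr),
     [/\ antilinear_between (Hom_G rhoR rhoV) (Hom_G rhoR rhoV) A1,
         antilinear B1,
         antilinear_between (Hom_G_dual inv rhoR rhoV) (Hom_G_dual inv rhoR rhoV) A2
       & antilinear B2] /\
     (forall h r, Hom_G rhoR rhoV h -> T (h r, 0) = (A1 h (B1 r), 0)) /\
     (forall f t, Hom_G_dual inv rhoR rhoV f -> T (0, f t) = (0, A2 f (B2 t)))).

Proof.
case: HG => Hgrp _.
case: Ha => [[ainv Hc1 Hc2] _].
have Hasurj : forall g, exists g', a g' = g by move=> g; exists (ainv g).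
case: HT => Ta _ _.
split => Hm.
- case: (partH_mix _ _ _ _ _ Hgrp _ _ HipR _ HrhoR Hirr _ _ HipV _ HrhoV Hiso _ Ta _ Hasurj HTa Hm) => A1 [B1 [[HA1 HB1] HT1]].
  case: (partD_mix _ _ _ _ _ Hgrp _ _ HipR _ HrhoR Hirr _ _ Hiso _ Ta _ Hasurj HTa Hm) => A2 [B2 [[HA2 HB2] HT2]].
  by exists A1, B1, A2, B2.
- case: (partH_non _ _ _ _ _ Hgrp _ _ HipR _ HrhoR Hirr _ _ Hiso _ Ta _ Hasurj HTa Hm) => A1 [B1 [[HA1 HB1] HT1]].
  case: (partD_non _ _ _ _ _ Hgrp _ _ HipR _ HrhoR Hirr _ _ HipV _ HrhoV Hiso _ Ta _ Hasurj HTa Hm) => A2 [B2 [[HA2 HB2] HT2]].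
  by exists A1, B1, A2, B2.
Qed.
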